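(* Let $A\in\mathbb{R}^{n\times n}$ be nonsingular with $A^{-1}\geq 0$. Let $A=P_{1}-R_{1}+S_{1}$ be a regular double splitting and $A=P_{2}-R_{2}+S_{2}$ be a weak regular double splitting of $A$. Define $$W_{1}=\begin{pmatrix} P_{1}^{-1}R_{1} & -P_{1}^{-1}S_{1}\\ I & 0\end{pmatrix},\qquad W_{2}=\begin{pmatrix} P_{2}^{-1}R_{2} & -P_{2}^{-1}S_{2}\\ I & 0\end{pmatrix},$$ where $I$ is the $n\times n$ identity matrix. If $P_{1}^{-1}\geq P_{2}^{-1}$ and $R_{1}\geq R_{2}$, then $\rho(W_{1})\leq \rho(W_{2})< 1$.
   Context: For real matrices, $B\geq 0$ means all entries of $B$ are nonnegative, and $B\geq C$ means $B-C\geq 0$. $\rho(\cdot)$ denotes the spectral radius. A double splitting of a square matrix $A$ is a decomposition $A=P-R+S$ with $P$ nonsingular. It is called regular if $P^{-1}\geq 0$, $R\geq 0$ and $-S\geq 0$; it is called weak regular if $P^{-1}\geq 0$, $P^{-1}R\geq 0$ and $-P^{-1}S\geq 0$. *)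

(* Defs.v *)
From HB Require Import structures.
From mathcomp Require Import all_boot all_order all_algebra.
From mathcomp Require Import complex.
From mathcomp Require Import classical_sets reals.
Set Implicit Arguments. Unset Strict Implicit. Unset Printing Implicit Defensive.
Import Order.TTheory GRing.Theory Num.Theory.
Local Open Scope ring_scope.

Definition nonneg_mx (R : realType) (m n : nat) (B : 'M[R]_(m, n)) : Prop :=
  forall i j, 0 <= B i j.

Definition ge_mx (R : realType) (m n : nat) (B C : 'M[R]_(m, n)) : Prop :=
  nonneg_mx (B - C).

Definition complex_eigenvalue (R : realType) (n : nat) (A : 'M[R]_n) (z : R[i]) : bool :=
  eigenvalue (map_mx (fun x : R => (x%:C)%C) A) z.

Definition spectral_radius (R : realType) (n : nat) (A : 'M[R]_n) : R :=
  sup [set complex.Re `|z| | z in [set z : R[i] | complex_eigenvalue A z]]%classic.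

Definition double_splitting (R : realType) (n : nat) (A P Rm S : 'M[R]_n) : Prop :=
  A = P - Rm + S /\ P \in unitmx.

Definition regular_double_splitting (R : realType) (n : nat) (A P Rm S : 'M[R]_n) : Prop :=
  double_splitting A P Rm S /\ nonneg_mx (invmx P) /\ nonneg_mx Rm /\ nonneg_mx (- S).

Definition weak_regular_double_splitting (R : realType) (n : nat) (A P Rm S : 'M[R]_n) : Prop :=
  double_splitting A P Rm S /\ nonneg_mx (invmx P) /\
  nonneg_mx (invmx P *m Rm) /\ nonneg_mx (- (invmx P *m S)).

Definition iter_mx (R : realType) (n : nat) (P Rm S : 'M[R]_n) : 'M[R]_(n + n) :=
  block_mx (invmx P *m Rm) (- (invmx P *m S)) 1%:M 0.

(* Main.v *)
Require Import Defs.
From HB Require Import structures.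
From mathcomp Require Import all_boot all_order all_algebra.
From mathcomp Require Import complex polyrcf polyorder.
From mathcomp Require Import boolp classical_sets reals lra.
Import Order.TTheory GRing.Theory Num.Theory.
Local Open Scope ring_scope.
Set Implicit Arguments. Unset Strict Implicit. Unset Printing Implicit Defensive.

Definition cn {R : realType} (z : R[i]) : R := complex.Re `|z|.

Lemma normcnE {R : realType} (z : R[i]) : `|z| = (cn z)%:C%C.
Proof. by rewrite /cn normc_def. Qed.

Lemma cn_ge0 {R : realType} (z : R[i]) : 0 <= cn z.
Proof. by rewrite -lecR -normcnE normr_ge0. Qed.

Lemma cnM {R : realType} (z w : R[i]) : cn (z * w) = cn z * cn w.
Proof. by apply: (@complexI R); rewrite rmorphM /= -!normcnE normrM. Qed.

Lemma cn_real {R : realType} (x : R) : cn (x%:C%C) = `|x|.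
Proof. by rewrite /cn normc_def /= expr0n /= addr0 sqrtr_sqr. Qed.

Lemma cn_eq0 {R : realType} (z : R[i]) : (cn z == 0) = (z == 0).
Proof.
apply/eqP/eqP => [h|->]; last by rewrite /cn normr0.
by apply/normr0_eq0; rewrite normcnE h.
Qed.

Lemma cn_sum {R : realType} (I : finType) (F : I -> R[i]) :
  cn (\sum_i F i) <= \sum_i cn (F i).
Proof.
rewrite -lecR rmorph_sum /=.
have -> : (cn (\sum_i F i))%:C%C = `|\sum_i F i| by rewrite normcnE.
apply: le_trans (ler_norm_sum _ _ _) _.
by rewrite le_eqVlt; apply/orP; left; apply/eqP; apply: eq_bigr => i _; rewrite normcnE.
Qed.

Lemma char_poly_horner {F : comNzRingType} {n : nat} (M : 'M[F]_n) (s : F) :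
  (char_poly M).[s] = \det (s%:M - M).
Proof.
rewrite /char_poly -[LHS]/(horner_eval s _) -det_map_mx; congr (\det _).
apply/matrixP => i j; rewrite !mxE /horner_eval.
by rewrite rmorphB rmorphMn /= /horner_eval hornerX hornerC.
Qed.

Lemma root_char_unit {F : fieldType} {n : nat} (M : 'M[F]_n) (s : F) :
  (s%:M - M \in unitmx) = ~~ root (char_poly M) s.
Proof. by rewrite unitmxE unitfE rootE char_poly_horner. Qed.

Lemma eig_col {F : fieldType} {n : nat} (M : 'M[F]_n) a :
  eigenvalue M a -> exists2 z : 'cV_n, z != 0 & M *m z = a *: z.
Proof.
rewrite eigenvalue_root_char -[root _ _]negbK -root_char_unit unitmxE unitfE negbK -det_tr.
case/det0P => v vn0 hv; exists v^T; first by rewrite trmx_eq0.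
apply/eqP; rewrite -subr_eq0; apply/eqP.
move: (congr1 trmx hv); rewrite trmx_mul trmxK trmx0 mulmxBl => h.
by apply/eqP; rewrite -oppr_eq0 opprB -mul_scalar_mx h.
Qed.

Lemma root_ceig {R : realType} {n : nat} (M : 'M[R]_n) (s : R) :
  root (char_poly M) s -> complex_eigenvalue M (s%:C%C).
Proof.
rewrite /complex_eigenvalue eigenvalue_root_char.
have -> : map_mx (fun x : R => (x%:C)%C) M = map_mx (real_complex R) M by [].
by rewrite -map_char_poly !rootE horner_map /= => /eqP ->.
Qed.

Lemma cV_neq0 {T : nmodType} {n : nat} (z : 'cV[T]_n) :
  z != 0 -> exists i, z i 0 != 0.
Proof.
move=> hz; apply/existsP; move: hz; apply: contraNT; rewrite negb_exists.
move=> /forallP h; apply/eqP/matrixP => i j; rewrite ord1 mxE.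
by move: (h i); rewrite negbK => /eqP.
Qed.

Definition absv {R : realType} {n : nat} (z : 'cV[R[i]]_n) : 'cV[R]_n :=
  \col_i cn (z i 0).

Lemma absv_ge0 {R : realType} {n : nat} (z : 'cV[R[i]]_n) : nonneg_mx (absv z).
Proof. by move=> i j; rewrite mxE cn_ge0. Qed.

Lemma eig_abs {R : realType} {n : nat} (M : 'M[R]_n) (z : 'cV[R[i]]_n) a :
  nonneg_mx M -> map_mx (fun x : R => (x%:C)%C) M *m z = a *: z ->
  forall i, cn a * absv z i 0 <= (M *m absv z) i 0.
Proof.
move=> M0 hz i; rewrite mxE -cnM.
have -> : a * z i 0 = (a *: z) i 0 by rewrite mxE.
rewrite -hz mxE; apply: le_trans (cn_sum _) _.
rewrite mxE le_eqVlt; apply/orP; left; apply/eqP/eq_bigr => j _.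
by rewrite !mxE cnM cn_real ger0_norm.
Qed.

Lemma absv_neq0 {R : realType} {n : nat} (z : 'cV[R[i]]_n) i :
  z i 0 != 0 -> 0 < absv z i 0.
Proof. by move=> h; rewrite mxE lt_def cn_eq0 h cn_ge0. Qed.

Lemma mulmx_le {R : realType} {n : nat} (M : 'M[R]_n) (x y : 'cV[R]_n) i :
  nonneg_mx M -> (forall k, x k 0 <= y k 0) -> (M *m x) i 0 <= (M *m y) i 0.
Proof.
move=> M0 hxy; rewrite !mxE; apply: ler_sum => k _.
by apply: ler_wpM2l; [apply: M0 | apply: hxy].
Qed.

Lemma eub {R : realType} {n : nat} (M : 'M[R]_n) (v : 'cV[R]_n) (b : R) :
  nonneg_mx M -> (forall i, 0 < v i 0) -> (forall i, (M *m v) i 0 <= b * v i 0) ->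
  forall a, complex_eigenvalue M a -> cn a <= b.
Proof.
move=> M0 vpos hv a /eig_col [z zn0 hz].
have [i0 hi0] := cV_neq0 zn0.
set u := absv z.
have [i _ hi] := @arg_maxP _ R _ i0 xpredT (fun k => u k 0 / v k 0) isT.
set t := u i 0 / v i 0 in hi.
have ut k : u k 0 <= t * v k 0.
  by rewrite -ler_pdivrMr //; apply: hi.
have ui : u i 0 = t * v i 0 by rewrite /t divfK // gt_eqF.
have tpos : 0 < t.
  by apply: lt_le_trans (hi i0 isT); rewrite divr_gt0 // absv_neq0.
have upos : 0 < u i 0 by rewrite ui mulr_gt0.
have h1 : cn a * u i 0 <= b * u i 0.
  apply: le_trans (eig_abs M0 hz i) _.
  have hut : forall k, u k 0 <= (t *: v) k 0 by move=> k; rewrite [X in _ <= X]mxE; exact: ut.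
  apply: le_trans (mulmx_le i M0 hut) _.
  rewrite -scalemxAr mxE ui mulrCA; apply: ler_wpM2l.
    exact: ltW.
  exact: hv.
by rewrite -(ler_pM2r upos).
Qed.

Lemma unit_of_inj {F : fieldType} {n : nat} (Q : 'M[F]_n) :
  (forall y : 'cV_n, Q *m y = 0 -> y = 0) -> Q \in unitmx.
Proof.
move=> h; rewrite unitmxE unitfE -det_tr; apply/negP => /eqP/eqP/det0P [w wn0 hw].
move: (congr1 trmx hw); rewrite trmx_mul trmxK trmx0 => /h /eqP.
by rewrite trmx_eq0 (negbTE wn0).
Qed.

Lemma QmulE {R : realType} {n : nat} (M : 'M[R]_n) t (y : 'cV_n) i :
  ((t%:M - M) *m y) i 0 = t * y i 0 - (M *m y) i 0.
Proof. by rewrite mulmxBl mul_scalar_mx !mxE. Qed.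

Lemma zmono {R : realType} {n : nat} (M : 'M[R]_n) t (v : 'cV_n) :
  nonneg_mx M -> (forall i, 0 < v i 0) -> (forall i, (M *m v) i 0 < t * v i 0) ->
  forall y : 'cV_n, (forall i, 0 <= ((t%:M - M) *m y) i 0) -> forall i, 0 <= y i 0.
Proof.
move=> M0 vpos hv y hy i.
have [k _ hk] := @arg_minP _ R _ i xpredT (fun j => y j 0 / v j 0) isT.
set tau := y k 0 / v k 0 in hk.
have yt j : tau * v j 0 <= y j 0 by rewrite -ler_pdivlMr //; apply: hk.
have yk : y k 0 = tau * v k 0 by rewrite /tau divfK // gt_eqF.
case: (lerP 0 tau) => htau.
  by apply: le_trans (yt i); rewrite mulr_ge0 // ltW.
exfalso; move: (hy k); rewrite QmulE; apply/negP; rewrite -ltNge subr_lt0.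
have hyt : forall j, (tau *: v) j 0 <= y j 0 by move=> j; rewrite mxE; exact: yt.
apply: lt_le_trans (mulmx_le k M0 hyt).
rewrite -scalemxAr mxE yk mulrCA ltr_nM2l //; exact: hv.
Qed.

Lemma zinv {R : realType} {n : nat} (M : 'M[R]_n) t (v : 'cV_n) :
  nonneg_mx M -> (forall i, 0 < v i 0) -> (forall i, (M *m v) i 0 < t * v i 0) ->
  (t%:M - M) \in unitmx /\ nonneg_mx (invmx (t%:M - M)).
Proof.
move=> M0 vpos hv.
have mono := zmono M0 vpos hv.
have U : (t%:M - M) \in unitmx.
  apply: unit_of_inj => y hy; apply/matrixP => i j; rewrite ord1 mxE.
  apply/eqP; rewrite eq_le; apply/andP; split.
    have := mono (- y) _ i; rewrite mxE oppr_ge0; apply => k.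
    by rewrite mulmxN hy oppr0 mxE.
  by apply: mono => k; rewrite hy mxE.
split => // i j.
have -> : invmx (t%:M - M) i j = col j (invmx (t%:M - M)) i 0 by rewrite mxE.
apply: mono => k; rewrite colE mulmxA mulmxV // mul1mx mxE.
by case: (k == j).
Qed.

Lemma nonneg_mul {R : realType} {m n p : nat} (A : 'M[R]_(m, n)) (B : 'M[R]_(n, p)) :
  nonneg_mx A -> nonneg_mx B -> nonneg_mx (A *m B).
Proof.
by move=> hA hB i j; rewrite mxE; apply: sumr_ge0 => k _; apply: mulr_ge0.
Qed.

Definition good {R : realType} {n : nat} (M : 'M[R]_n) (s : R) : bool :=
  (s%:M - M \in unitmx) && [forall i, [forall j, 0 <= invmx (s%:M - M) i j]].

Lemma goodP {R : realType} {n : nat} (M : 'M[R]_n) (s : R) :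
  good M s <-> ((s%:M - M \in unitmx) /\ nonneg_mx (invmx (s%:M - M))).
Proof.
split => [/andP [U /forallP h] | [U h]].
  by split => // i j; move: (h i) => /forallP; apply.
by rewrite /good U /=; apply/forallP => i; apply/forallP => j; apply: h.
Qed.

Lemma el {R : realType} {n : nat} (M : 'M[R]_n) t (x : 'cV_n) :
  nonneg_mx M -> good M t -> nonneg_mx x -> (forall i, t * x i 0 <= (M *m x) i 0) ->
  x = 0.
Proof.
move=> M0 /goodP [U N0] x0 hx.
have h1 : nonneg_mx (- ((t%:M - M) *m x)).
  by move=> i j; rewrite ord1 mxE QmulE oppr_ge0 subr_le0.
have h2 : - x = invmx (t%:M - M) *m (- ((t%:M - M) *m x)).
  by rewrite mulmxN mulKmx.
have h3 := nonneg_mul N0 h1; rewrite -h2 in h3.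
apply/matrixP => i j; rewrite !mxE; apply/eqP; rewrite eq_le x0 andbT.
by move: (h3 i j); rewrite mxE oppr_ge0.
Qed.

Lemma el_eig {R : realType} {n : nat} (M : 'M[R]_n) t a :
  nonneg_mx M -> good M t -> complex_eigenvalue M a -> cn a < t.
Proof.
move=> M0 G /eig_col [z zn0 hz].
have [i0 hi0] := cV_neq0 zn0.
rewrite ltNge; apply/negP => hta.
have := el M0 G (absv_ge0 z) _.
have H : forall i, t * absv z i 0 <= (M *m absv z) i 0.
  move=> i; apply: le_trans (eig_abs M0 hz i); apply: ler_wpM2r => //.
  exact: absv_ge0.
move=> /(_ H) /matrixP /(_ i0 0); rewrite mxE => /eqP.
by rewrite mxE cn_eq0 (negbTE hi0).
Qed.

Lemma rs {R : realType} (q : {poly R}) (c : R) :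
  q.[c] < 0 -> exists s, c < s /\ q.[s] < 0.
Proof.
move=> hc.
have qn0 : q != 0 by apply: contraTneq hc => ->; rewrite horner0 ltxx.
have [y hy] := @neighpr_wit R q c (c + 1) (ltr_pwDr ltr01 (lexx c) : c < c + 1) qn0.
exists y; split.
  by move: hy; rewrite /neighpr in_itv /= => /andP [].
have := sgr_neighprN (ltr0_neq0 hc) hy.
by rewrite (ltr0_sg hc) => /eqP; rewrite sgr_cp0.
Qed.

Lemma cpm_eval {R : comNzRingType} {n : nat} (M : 'M[R]_n) (s : R) :
  map_mx (horner_eval s) (char_poly_mx M) = s%:M - M.
Proof.
apply/matrixP => i j; rewrite !mxE.
by rewrite rmorphB rmorphMn /= /horner_eval hornerX hornerC.
Qed.

Lemma adj_eval {R : comNzRingType} {n : nat} (M : 'M[R]_n) (s : R) i j :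
  (\adj (char_poly_mx M) i j).[s] = \adj (s%:M - M) i j.
Proof.
have := map_mx_adj (horner_eval s) (char_poly_mx M).
by rewrite cpm_eval => <-; rewrite [RHS]mxE.
Qed.

Lemma invmx_adj {R : fieldType} {n : nat} (A : 'M[R]_n) :
  A \in unitmx -> \adj A = \det A *: invmx A.
Proof.
move=> U; rewrite /invmx U scalerA mulfV ?scale1r //.
by move: U; rewrite unitmxE unitfE.
Qed.

Lemma rowpos {R : realType} {n : nat} (X : 'M[R]_n) :
  nonneg_mx X -> X \in unitmx -> forall i, 0 < (X *m (const_mx 1 : 'cV[R]_n)) i 0.
Proof.
move=> X0 U i; rewrite mxE lt_def sumr_ge0 ?andbT; last first.
  by move=> j _; rewrite mxE mulr1 X0.
apply/negP => /eqP h.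
have h0 : forall k, xpredT k -> 0 <= X i k * (const_mx 1 : 'cV[R]_n) k 0.
  by move=> k _; rewrite mxE mulr1 X0.
have h2 : forall j, X i j = 0.
  by move=> j; have := psumr_eq0P h0 h (isT : xpredT j); rewrite mxE mulr1.
have := mulmxV U; move/matrixP/(_ i i); rewrite !mxE eqxx /=.
rewrite big1 ?mulr1n; last by move=> j _; rewrite h2 mul0r.
by move/eqP; rewrite eq_sym oner_eq0.
Qed.

Lemma oc {R : realType} {n : nat} (M : 'M[R]_n) c :
  nonneg_mx M -> (c%:M - M) \in unitmx -> (forall s, c < s -> good M s) ->
  exists2 e : R, 0 < e & forall s, c - e <= s -> s <= c -> good M s.
Proof.
move=> M0 U Hs.
have qE : forall i j s, (s%:M - M) \in unitmx ->
    (\adj (char_poly_mx M) i j * char_poly M).[s] =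
    (\det (s%:M - M))^+2 * invmx (s%:M - M) i j.
  move=> i j s Us; rewrite hornerM adj_eval char_poly_horner invmx_adj // mxE.
  by rewrite mulrC mulrA expr2.
have detsq : forall s, (s%:M - M) \in unitmx -> 0 < (\det (s%:M - M))^+2.
  by move=> s Us; rewrite exprn_even_gt0 //=; move: Us; rewrite unitmxE unitfE.
have N0 : nonneg_mx (invmx (c%:M - M)).
  move=> i j; rewrite leNgt; apply/negP => hneg.
  have : (\adj (char_poly_mx M) i j * char_poly M).[c] < 0.
    by rewrite qE // pmulr_rlt0 // detsq.
  case/rs => s [cs qs].
  have [Us N0s] := (goodP M s).1 (Hs s cs).
  by move: qs; rewrite qE // ltNge mulr_ge0 ?N0s // ltW // detsq.
have NU : invmx (c%:M - M) \in unitmx by rewrite unitmx_inv.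
set v := invmx (c%:M - M) *m (const_mx 1 : 'cV[R]_n).
have vpos : forall i, 0 < v i 0 by apply: rowpos.
set V := \sum_i v i 0.
have vV : forall i, v i 0 <= V.
  move=> i; rewrite /V (bigD1 i) //= lerDl sumr_ge0 // => j _.
  exact: ltW.
have V0 : 0 <= V by apply: sumr_ge0 => i _; apply: ltW.
have Qv : (c%:M - M) *m v = const_mx 1 by rewrite /v mulmxA mulmxV // mul1mx.
exists (1 + V)^-1; first by rewrite invr_gt0 ltr_pwDl.
move=> s h1 h2; apply/goodP; apply: (zinv M0 vpos) => i.
have Mv : (M *m v) i 0 = c * v i 0 - 1.
  by have := QmulE M c v i; rewrite Qv mxE => ->; rewrite opprB addrC subrK.
have hcs : (c - s) * v i 0 <= (1 + V)^-1 * V.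
  apply: ler_pM; [lra | exact: ltW | lra | exact: vV].
have hV : (1 + V)^-1 * V < 1.
  by rewrite mulrC ltr_pdivrMr ?mul1r; [lra | lra].
rewrite Mv; move: hcs hV; rewrite mulrBl; lra.
Qed.

Lemma hard {R : realType} {n : nat} (M : 'M[R]_n) t :
  nonneg_mx M -> (forall s, t <= s -> (s%:M - M) \in unitmx) -> good M t.
Proof.
move=> M0 HU.
set S := 1 + \sum_i \sum_j M i j.
have big : forall s, S <= s -> good M s.
  move=> s hs; apply/goodP.
  apply: (zinv M0 (v := const_mx 1)) => i; first by rewrite mxE ltr01.
  rewrite mxE mxE mulr1; apply: le_lt_trans (_ : _ <= \sum_i \sum_j M i j) _.
    under eq_bigr do rewrite mxE mulr1.
    rewrite [X in _ <= X](bigD1 i) //= lerDl sumr_ge0 // => k _.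
    by apply: sumr_ge0 => j _; apply: M0.
  by apply: lt_le_trans hs; rewrite /S ltrDr ltr01.
case G : (good M t) => //; exfalso.
pose Bad := [set s : R | t <= s /\ ~~ good M s]%classic.
have BadS : forall s, Bad s -> s <= S.
  by move=> s [_ hs]; rewrite leNgt; apply/negP => /ltW /big; apply/negP.
have hsup : has_sup Bad.
  split; first by exists t; split; rewrite ?lexx ?G.
  by exists S => s /BadS.
set c := sup Bad.
have tc : t <= c by apply: sup_upper_bound => //; split; rewrite ?lexx ?G.
have gc : forall s, c < s -> good M s.
  move=> s cs; case Gs : (good M s) => //; exfalso.
  have : Bad s by split; [apply: le_trans (ltW cs) | rewrite Gs].
  by move/(sup_upper_bound hsup); rewrite leNgt cs.
have [e e0 He] := oc M0 (HU c tc) gc.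
have [b Bb hb] := sup_adherent e0 hsup.
have bc : b <= c by apply: sup_upper_bound.
move: Bb => [_ /negP]; apply; apply: He => //; exact: ltW.
Qed.

Lemma mx_neq0 {T : nmodType} {m n : nat} (A : 'M[T]_(m, n)) :
  A != 0 -> exists i j, A i j != 0.
Proof.
move=> hA.
have : [exists i, [exists j, A i j != 0]].
  move: hA; apply: contraNT; rewrite negb_exists => /forallP h.
  apply/eqP/matrixP => i j; rewrite mxE.
  by move: (h i); rewrite negb_exists => /forallP /(_ j); rewrite negbK => /eqP.
by case/existsP => i /existsP [j hj]; exists i, j.
Qed.

Lemma ev {R : realType} {n : nat} (M : 'M[R]_n) r :
  root (char_poly M) r -> (forall s, r < s -> good M s) ->
  exists2 u : 'cV_n, nonneg_mx u /\ u != 0 & M *m u = r *: u.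
Proof.
move=> rr gr.
set p := char_poly M.
set Q := \adj (char_poly_mx M).
have hQ : char_poly_mx M *m Q = p%:M by rewrite mul_mx_adj.
have pn0 : p != 0 by apply: monic_neq0; apply: char_poly_monic.
have [i0 _] : exists i0 : 'I_n, True.
  move: rr; rewrite -[root _ _]negbK -root_char_unit unitmxE unitfE negbK.
  rewrite -det_tr => /det0P [w wn0 _].
  by have [_ [j _]] := mx_neq0 wn0; exists j.
have Qn0 : Q != 0.
  apply/eqP => Q0; move: hQ; rewrite Q0 mulmx0 => /matrixP /(_ i0 i0).
  by rewrite !mxE eqxx mulr1n => /esym/eqP; rewrite (negbTE pn0).
have [i1 [j1 hij1]] := mx_neq0 Qn0.
pose P := fun m => [exists i, [exists j, (Q i j != 0) && (\mu_r (Q i j) == m)]].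
have exP : exists m, P m.
  exists (\mu_r (Q i1 j1)); apply/existsP; exists i1; apply/existsP; exists j1.
  by rewrite hij1 eqxx.
case: (ex_minnP exP) => m0 hPm minm.
move: hPm; rewrite /P => /existsP [ia /existsP [ja /andP [Qa /eqP mua]]].
have minm' : forall i j, Q i j != 0 -> (m0 <= \mu_r (Q i j))%N.
  move=> i j h; apply: minm; rewrite /P; apply/existsP; exists i; apply/existsP; exists j.
  by rewrite h eqxx.
set d := ('X - r%:P)^+m0.
have dn0 : d != 0 by rewrite expf_neq0 // polyXsubC_eq0.
have dQ : forall i j, d %| Q i j.
  move=> i j; case: (eqVneq (Q i j) 0) => [->|h]; first exact: dvdp0.
  by rewrite root_le_mu // minm'.
set D := \matrix_(i, j) (Q i j %/ d).
have QD : Q = d *: D by apply/matrixP => i j; rewrite [RHS]mxE [D i j]mxE mulrC divpK ?dQ.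
have hD : char_poly_mx M *m D = ((char_poly_mx M *m D) i0 i0)%:M.
  have h1 : d *: (char_poly_mx M *m D) = p%:M by rewrite scalemxAr -QD.
  move: (char_poly_mx M *m D) h1 => X /matrixP H.
  have H00 := H i0 i0; rewrite !mxE (eqxx i0) mulr1n in H00.
  apply/matrixP => i j; have Hij := H i j; rewrite !mxE in Hij *.
  move: Hij; case: (eqVneq i j) => [<-|nij] Hij.
    by rewrite mulr1n; apply: (mulfI dn0); rewrite Hij mulr1n H00.
  rewrite mulr0n in Hij *.
  by move/eqP: Hij; rewrite mulf_eq0 (negbTE dn0) /= => /eqP.
set p' := (char_poly_mx M *m D) i0 i0.
set Dr := map_mx (horner_eval r) D.
have hDr : (r%:M - M) *m Dr = (p'.[r])%:M.
  have := f_equal (map_mx (horner_eval r)) hD.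
  by rewrite map_mxM cpm_eval map_scalar_mx.
have hDr0 : (r%:M - M) *m Dr = 0.
  case: (eqVneq p'.[r] 0) => [h|h].
    by rewrite hDr h; apply/matrixP => i j; rewrite !mxE mul0rn.
  exfalso.
  have : (r%:M - M) *m (p'.[r]^-1 *: Dr) = 1%:M.
    by rewrite -scalemxAr hDr scale_scalar_mx mulVf.
  by case/mulmx1_unit => U _; move: U; rewrite root_char_unit rr.
have Dpos : forall i j s, r < s -> 0 <= (D i j).[s].
  move=> i j s rs.
  have ps : 0 < p.[s].
    have noroot : {in `[s, +oo[, forall y, ~~ root p y}.
      move=> y; rewrite in_itv /= andbT => sy; rewrite -root_char_unit.
      by have /andP [] := gr y (lt_le_trans rs sy).
    have := sgp_pinftyP noroot.
    rewrite /sgp_pinfty (monicP (char_poly_monic M)) sgr1 => /(_ s).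
    by rewrite in_itv /= lexx => /(_ isT)/eqP; rewrite sgr_cp0.
  have [Us N0s] := (goodP M s).1 (gr s rs).
  have : 0 <= (Q i j).[s].
    by rewrite /Q adj_eval invmx_adj // mxE -char_poly_horner mulr_ge0 // ltW.
  rewrite QD mxE hornerM /d horner_exp hornerXsubC pmulr_rge0 //.
  by rewrite exprn_gt0 // subr_gt0.
have Dr0 : nonneg_mx Dr.
  move=> i j; rewrite mxE /horner_eval leNgt; apply/negP => /rs [s [rs' hs]].
  by move: (Dpos i j s rs'); rewrite leNgt hs.
have Dra : Dr ia ja != 0.
  rewrite mxE /horner_eval /D mxE.
  have [q nq hq] := mu_spec r Qa; rewrite mua -/d in hq.
  by rewrite hq mulpK // -rootE.
exists (col ja Dr).
  split; first by move=> i j; rewrite mxE; exact: Dr0.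
  apply/eqP => h; move: Dra; move/matrixP: h => /(_ ia 0).
  by rewrite !mxE => ->; rewrite eqxx.
have : (r%:M - M) *m col ja Dr = 0 by rewrite colE mulmxA hDr0 mul0mx.
rewrite mulmxBl mul_scalar_mx => /eqP; rewrite subr_eq0 => /eqP <-.
by [].
Qed.

Lemma sr_empty {R : realType} {n : nat} (M : 'M[R]_n) :
  ~ (exists a, complex_eigenvalue M a) -> spectral_radius M = 0.
Proof.
move=> H; rewrite /spectral_radius.
have -> : [set complex.Re `|z| | z in [set z : R[i] | complex_eigenvalue M z]]%classic
    = set0.
  apply/seteqP; split => x // [z hz _]; exfalso; apply: H; exists z; exact: hz.
exact: sup0.
Qed.

Lemma sr_bound_ne {R : realType} {n : nat} (M : 'M[R]_n) b :
  (exists a, complex_eigenvalue M a) ->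
  (forall a, complex_eigenvalue M a -> cn a <= b) -> spectral_radius M <= b.
Proof.
move=> [a ha] hb; apply: ge_sup; first by exists (cn a), a.
by move=> x [z hz <-]; apply: hb.
Qed.

Lemma sr_bound {R : realType} {n : nat} (M : 'M[R]_n) b :
  0 <= b -> (forall a, complex_eigenvalue M a -> cn a <= b) -> spectral_radius M <= b.
Proof.
move=> b0 hb; case: (pselect (exists a, complex_eigenvalue M a)) => H.
  exact: sr_bound_ne.
by rewrite sr_empty.
Qed.

Lemma sr_ge {R : realType} {n : nat} (M : 'M[R]_n) b a :
  (forall a, complex_eigenvalue M a -> cn a <= b) ->
  complex_eigenvalue M a -> cn a <= spectral_radius M.
Proof.
move=> hb ha; apply: sup_upper_bound; last by exists a.
split; first by exists (cn a), a.
by exists b => x [z hz <-]; apply: hb.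
Qed.

Lemma sr_ge0 {R : realType} {n : nat} (M : 'M[R]_n) b :
  (forall a, complex_eigenvalue M a -> cn a <= b) -> 0 <= spectral_radius M.
Proof.
move=> hb; case: (pselect (exists a, complex_eigenvalue M a)) => [[a ha]|H].
  by apply: le_trans (cn_ge0 a) (sr_ge hb ha).
by rewrite sr_empty.
Qed.

Lemma eig_bounded {R : realType} {n : nat} (M : 'M[R]_n) :
  nonneg_mx M -> exists b, forall a, complex_eigenvalue M a -> cn a <= b.
Proof.
move=> M0; exists (\sum_i \sum_j M i j); apply: (eub M0 (v := const_mx 1)).
  by move=> i; rewrite mxE ltr01.
move=> i; rewrite !mxE mulr1.
under eq_bigr do rewrite mxE mulr1.
rewrite [X in _ <= X](bigD1 i) //= lerDl sumr_ge0 // => k _.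
by apply: sumr_ge0 => j _; apply: M0.
Qed.

Lemma perron {R : realType} {n : nat} (M : 'M[R]_n) :
  nonneg_mx M -> (exists a, complex_eigenvalue M a) ->
  root (char_poly M) (spectral_radius M) /\
  exists2 u : 'cV_n, nonneg_mx u /\ u != 0 & M *m u = spectral_radius M *: u.
Proof.
move=> M0 hne; have [b hb] := eig_bounded M0.
set r := spectral_radius M.
have unit_gt : forall s, r < s -> (s%:M - M) \in unitmx.
  move=> s rs; rewrite root_char_unit; apply/negP => /root_ceig h.
  have := sr_ge hb h; rewrite cn_real -/r => hs.
  by move: (le_trans (ler_norm s) hs); rewrite leNgt rs.
have gr : forall s, r < s -> good M s.
  move=> s rs; apply: hard => // s' ss'; apply: unit_gt; exact: lt_le_trans ss'.
have rr : root (char_poly M) r.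
  case rr : (root (char_poly M) r) => //; exfalso.
  have U : (r%:M - M) \in unitmx by rewrite root_char_unit rr.
  have [e e0 He] := oc M0 U gr.
  have G : good M (r - e) by apply: He; rewrite ?lexx // gerBl ltW.
  have : r <= r - e.
    apply: sr_bound_ne => // a ha; apply: ltW; exact: el_eig M0 G ha.
  by rewrite lerBrDr gerDl leNgt e0.
by split => //; apply: ev.
Qed.

Lemma lbcore {R : realType} {n : nat} (M : 'M[R]_n) t (x : 'cV_n) :
  nonneg_mx M -> nonneg_mx x -> x != 0 -> (forall i, t * x i 0 <= (M *m x) i 0) ->
  exists2 s, t <= s & root (char_poly M) s.
Proof.
move=> M0 x0 xn0 hx.
case: (pselect (exists2 s, t <= s & root (char_poly M) s)) => // H; exfalso.
have G : good M t.
  apply: hard => // s ts; rewrite root_char_unit; apply/negP => rs.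
  by apply: H; exists s.
by move: xn0; rewrite (el M0 G x0 hx) eqxx.
Qed.

Lemma split_all {m1 m2 : nat} (Pr : 'I_(m1 + m2) -> Prop) :
  (forall i, Pr (lshift m2 i)) -> (forall i, Pr (rshift m1 i)) -> forall i, Pr i.
Proof.
by move=> hl hr i; rewrite -(splitK i); case: (split i) => j /=; [apply: hl | apply: hr].
Qed.

Lemma nonneg_block {R : realType} {m1 m2 n1 n2 : nat}
  (Aul : 'M[R]_(m1, n1)) (Aur : 'M[R]_(m1, n2)) (Adl : 'M[R]_(m2, n1)) (Adr : 'M[R]_(m2, n2)) :
  nonneg_mx Aul -> nonneg_mx Aur -> nonneg_mx Adl -> nonneg_mx Adr ->
  nonneg_mx (block_mx Aul Aur Adl Adr).
Proof.
move=> h1 h2 h3 h4 i j; move: i; apply: split_all => i; move: j; apply: split_all => j.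
- by rewrite block_mxEul.
- by rewrite block_mxEur.
- by rewrite block_mxEdl.
- by rewrite block_mxEdr.
Qed.

Lemma nonneg_add {R : realType} {m n : nat} (A B : 'M[R]_(m, n)) :
  nonneg_mx A -> nonneg_mx B -> nonneg_mx (A + B).
Proof. by move=> hA hB i j; rewrite mxE addr_ge0. Qed.

Lemma nonneg_scale {R : realType} {m n : nat} (a : R) (A : 'M[R]_(m, n)) :
  0 <= a -> nonneg_mx A -> nonneg_mx (a *: A).
Proof. by move=> ha hA i j; rewrite mxE mulr_ge0. Qed.

Lemma nonneg_id {R : realType} {n : nat} : nonneg_mx (1%:M : 'M[R]_n).
Proof. by move=> i j; rewrite mxE; case: (i == j). Qed.

Lemma nonneg0 {R : realType} {m n : nat} : nonneg_mx (0 : 'M[R]_(m, n)).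
Proof. by move=> i j; rewrite mxE. Qed.

Lemma iter_nonneg {R : realType} {n : nat} (P Rm S : 'M[R]_n) :
  nonneg_mx (invmx P *m Rm) -> nonneg_mx (- (invmx P *m S)) ->
  nonneg_mx (iter_mx P Rm S).
Proof.
by move=> h1 h2; apply: nonneg_block => //; [apply: nonneg_id | apply: nonneg0].
Qed.

Lemma C_eq {R : realType} {n : nat} (A P Rm S : 'M[R]_n) :
  A = P - Rm + S -> P \in unitmx ->
  - (invmx P *m S) = 1%:M - invmx P *m Rm - invmx P *m A.
Proof.
move=> hA PU; rewrite hA mulmxDr mulmxBr mulVmx //.
by rewrite opprD addrA subrr add0r.
Qed.

Lemma mxBE {T : zmodType} {m n : nat} (x y : 'M[T]_(m, n)) i j :
  (x - y) i j = x i j - y i j.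
Proof. by rewrite !mxE. Qed.
Lemma mxDE {T : zmodType} {m n : nat} (x y : 'M[T]_(m, n)) i j :
  (x + y) i j = x i j + y i j.
Proof. by rewrite !mxE. Qed.
Lemma mxNE {T : zmodType} {m n : nat} (x : 'M[T]_(m, n)) i j :
  (- x) i j = - x i j.
Proof. by rewrite !mxE. Qed.
Lemma mxZE {T : pzRingType} {m n : nat} (a : T) (x : 'M[T]_(m, n)) i j :
  (a *: x) i j = a * x i j.
Proof. by rewrite !mxE. Qed.

Lemma conv_bound {R : realType} {n : nat} (A P Rm S : 'M[R]_n) :
  A \in unitmx -> nonneg_mx (invmx A) -> weak_regular_double_splitting A P Rm S ->
  exists2 b : R, (0 <= b /\ b < 1) &
    forall a, complex_eigenvalue (iter_mx P Rm S) a -> cn a <= b.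
Proof.
move=> AU A0 [[hA PU] [X0 [B0 C0]]].
set X := invmx P in X0 B0 C0 *.
set B := X *m Rm in B0 *. set C := - (X *m S) in C0 *.
set e := (const_mx 1 : 'cV[R]_n).
have e0 : nonneg_mx e by move=> i j; rewrite mxE.
set u := invmx A *m e. set w := X *m e.
have BC : B + C = 1%:M - X *m A.
  by rewrite /C (C_eq hA PU) -/X -/B addrA [B + _]addrC subrK.
have u0 : nonneg_mx u by apply: nonneg_mul.
have wpos : forall i, 0 < w i 0 by apply: rowpos; rewrite // unitmx_inv.
have Tu : (B + C) *m u = u - w by rewrite BC mulmxBl mul1mx -mulmxA mulKVmx.
have uw : forall i, w i 0 <= u i 0.
  move=> i; have := nonneg_mul (nonneg_add B0 C0) u0 i 0.
  by rewrite Tu mxBE subr_ge0.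
have upos : forall i, 0 < u i 0 by move=> i; apply: lt_le_trans (uw i).
set eps := \big[Num.min/1]_(i < n) w i 0.
have eps0 : 0 < eps by apply: lt_bigmin => // i _; apply: wpos.
have epsw : forall i, eps <= w i 0 by move=> i; apply: bigmin_le.
set c := \sum_(i < n) (C *m e) i 0.
have Ce0 : nonneg_mx (C *m e) by apply: nonneg_mul.
have Cec : forall i, (C *m e) i 0 <= c.
  by move=> i; rewrite /c (bigD1 i) //= lerDl sumr_ge0 // => j _; apply: Ce0.
have c0 : 0 <= c by apply: sumr_ge0 => i _; apply: Ce0.
set d := eps / (1 + c).
have c1 : 0 < 1 + c by lra.
have d0 : 0 < d by rewrite divr_gt0.
have dc : d * c < eps.
  rewrite /d mulrAC ltr_pdivrMr //; lra.
set v := col_mx u (u + d *: e).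
set W := iter_mx P Rm S.
have Wv : W *m v = col_mx (u - w + d *: (C *m e)) u.
  rewrite /W /iter_mx mul_block_col mul1mx mul0mx addr0 -/X -/B -/C.
  by rewrite mulmxDr -scalemxAr addrA -mulmxDl Tu.
have vpos : forall i, 0 < v i 0.
  apply: split_all => i; rewrite ?col_mxEu ?col_mxEd //.
  by rewrite mxDE mxZE [e i 0]mxE mulr1 addr_gt0.
have Wlt : forall i, (W *m v) i 0 < v i 0.
  rewrite Wv; apply: split_all => i; rewrite ?col_mxEu ?col_mxEd.
    rewrite mxDE mxBE mxZE.
    have h1 := epsw i; have h2 : d * (C *m e) i 0 <= d * c.
      by apply: ler_wpM2l; [apply: ltW | apply: Cec].
    lra.
  by rewrite mxDE mxZE [e i 0]mxE mulr1 ltrDl.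
exists (\big[Num.max/0]_(i < n + n) ((W *m v) i 0 / v i 0)).
  split; first exact: bigmax_ge_id.
  apply: bigmax_lt => // i _; rewrite ltr_pdivrMr // mul1r; exact: Wlt.
apply: eub (vpos) _.
  by apply: iter_nonneg.
move=> i; rewrite -ler_pdivrMr //.
exact: (le_bigmax 0 (fun i => (W *m v) i 0 / v i 0) i).
Qed.

Unset Implicit Arguments.
Set Strict Implicit.

Theorem corollary3p4 (R : realType) (n : nat) (A P1 R1 S1 P2 R2 S2 : 'M[R]_n) :
  A \in unitmx -> nonneg_mx (invmx A) ->
  regular_double_splitting A P1 R1 S1 ->
  weak_regular_double_splitting A P2 R2 S2 ->
  ge_mx (invmx P1) (invmx P2) -> ge_mx R1 R2 ->
  spectral_radius (iter_mx P1 R1 S1) <= spectral_radius (iter_mx P2 R2 S2) /\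
  spectral_radius (iter_mx P2 R2 S2) < 1.
Proof.
move=> AU A0 reg1 wreg2 X12 R12.
have [[hA1 P1U] [X10 [R10 S10]]] := reg1.
have wreg1 : weak_regular_double_splitting A P1 R1 S1.
  split; first by case: reg1.
  split => //; split; first exact: nonneg_mul.
  by rewrite -mulmxN; apply: nonneg_mul.
have [[hA2 P2U] [X20 [B20 C20]]] := wreg2.
have [_ [_ [B10 C10]]] := wreg1.
have [b1 [b10 b11] hb1] := conv_bound AU A0 wreg1.
have [b2 [b20 b21] hb2] := conv_bound AU A0 wreg2.
set W1 := iter_mx P1 R1 S1 in hb1 *.
set W2 := iter_mx P2 R2 S2 in hb2 *.
have W10 : nonneg_mx W1 by apply: iter_nonneg.
have W20 : nonneg_mx W2 by apply: iter_nonneg.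
have sr2 : spectral_radius W2 <= b2 := sr_bound b20 hb2.
split; last exact: le_lt_trans sr2 b21.
case: (pselect (exists a, complex_eigenvalue W1 a)) => [hne|hne]; last first.
  by rewrite sr_empty //; exact: sr_ge0 hb2.
have [rr [u [u0 un0] hu]] := perron W10 hne.
set r := spectral_radius W1 in rr hu *.
have r0 : 0 <= r := sr_ge0 hb1.
have r1 : r < 1.
  by have := hb1 _ (root_ceig rr); rewrite cn_real ger0_norm // => h; apply: le_lt_trans b11.
case: (lerP r 0) => [rle0|rpos]; first exact: le_trans rle0 (sr_ge0 hb2).
set X1 := invmx P1 in X10 B10 C10 X12 *.
set X2 := invmx P2 in X20 B20 C20 X12 *.
set B1 := X1 *m R1 in B10 *. set C1 := - (X1 *m S1) in C10 *.
set B2 := X2 *m R2 in B20 *. set C2 := - (X2 *m S2) in C20 *.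
set u1 := usubmx u. set u2 := dsubmx u.
have uE : u = col_mx u1 u2 by rewrite vsubmxK.
move: hu; rewrite uE /W1 /iter_mx -/X1 -/B1 -/C1 mul_block_col mul1mx mul0mx addr0.
rewrite scale_col_mx => /eq_col_mx [e1 e2].
have u10 : nonneg_mx u1 by move=> i j; rewrite mxE; apply: u0.
have u1n0 : u1 != 0.
  apply/eqP => h; move: un0; rewrite uE h.
  have -> : u2 = 0.
    have : r *: u2 = 0 by rewrite -e2 h.
    by move/eqP; rewrite scalemx_eq0 (gt_eqF rpos) /= => /eqP.
  by rewrite col_mx0 eqxx.
have F1u : r *: (B1 *m u1) + C1 *m u1 = (r ^+ 2) *: u1.
  by rewrite {2}e2 -scalemxAr -scalerDr e1 scalerA -expr2.
set a := A *m u1. set bR := R1 *m u1. set cS := (- S1) *m u1.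
have bR0 : nonneg_mx bR by apply: nonneg_mul.
have cS0 : nonneg_mx cS by apply: nonneg_mul.
have hX : X1 *m (r *: bR + cS) = r ^+ 2 *: u1.
  by rewrite mulmxDr -scalemxAr /bR /cS !mulmxA mulmxN -F1u.
have hP : r *: bR + cS = r ^+ 2 *: (a + bR + cS).
  have := f_equal (mulmx P1) hX; rewrite mulKVmx // => ->.
  rewrite -scalemxAr; congr (_ *: _).
  have -> : P1 = A + R1 - S1 by rewrite hA1 [P1 - R1 + S1 + R1]addrAC subrK addrK.
  by rewrite !mulmxDl.
have a0 : nonneg_mx a.
  move=> i j; rewrite ord1.
  move/matrixP: hP => /(_ i 0); rewrite !(mxDE, mxZE) => hPi.
  have hb := bR0 i 0; have hc := cS0 i 0.
  have r2 : r ^+ 2 <= 1 by rewrite expr_le1 // ltW.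
  have key : r ^+ 2 * a i 0 = r * (1 - r) * bR i 0 + (1 - r ^+ 2) * cS i 0.
    by move: hPi; rewrite !expr2; lra.
  have : 0 <= r ^+ 2 * a i 0.
    rewrite key; apply: addr_ge0; apply: mulr_ge0 => //; first apply: mulr_ge0 => //.
      by rewrite subr_ge0 ltW.
    by rewrite subr_ge0.
  by rewrite pmulr_rge0 // exprn_gt0.
have C1E := C_eq hA1 P1U. have C2E := C_eq hA2 P2U.
set g1 := B1 *m u1. set g2 := B2 *m u1. set h1 := X1 *m a. set h2 := X2 *m a.
have Cu1 : C1 *m u1 = u1 - g1 - h1.
  by rewrite /C1 C1E !mulmxBl mul1mx /h1 /a mulmxA.
have Cu2 : C2 *m u1 = u1 - g2 - h2.
  by rewrite /C2 C2E !mulmxBl mul1mx /h2 /a mulmxA.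
have BB0 : nonneg_mx (B1 - B2).
  have -> : B1 - B2 = (X1 - X2) *m R1 + X2 *m (R1 - R2).
    by rewrite mulmxBl mulmxBr addrA subrK.
  by apply: nonneg_add; apply: nonneg_mul.
have main : forall i, r ^+ 2 * u1 i 0 <= r * g2 i 0 + (C2 *m u1) i 0.
  move=> i.
  have F1i : r * g1 i 0 + (u1 i 0 - g1 i 0 - h1 i 0) = r ^+ 2 * u1 i 0.
    by move/matrixP: F1u => /(_ i 0); rewrite Cu1 !(mxDE, mxNE, mxZE) !addrA.
  have dg : 0 <= g1 i 0 - g2 i 0.
    by have := nonneg_mul BB0 u10 i 0; rewrite mulmxBl mxBE.
  have dh : 0 <= h1 i 0 - h2 i 0.
    by have := nonneg_mul X12 a0 i 0; rewrite mulmxBl mxBE.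
  have f : 0 <= (1 - r) * (g1 i 0 - g2 i 0) by rewrite mulr_ge0 // subr_ge0 ltW.
  rewrite Cu2 !mxBE; move: F1i f dh; rewrite !expr2; lra.
set x := col_mx u1 (r^-1 *: u1).
have W2x : W2 *m x = col_mx (g2 + r^-1 *: (C2 *m u1)) u1.
  by rewrite /W2 /iter_mx -/X2 -/B2 -/C2 mul_block_col mul1mx mul0mx addr0 -scalemxAr.
have rn0 : r != 0 by rewrite gt_eqF.
have hx : forall i, r * x i 0 <= (W2 *m x) i 0.
  rewrite W2x; apply: split_all => i; rewrite ?col_mxEu ?col_mxEd.
    rewrite mxDE mxZE -(ler_pM2l rpos) mulrDr mulVKf //.
    by move: (main i); rewrite expr2 mulrA.
  by rewrite mxZE mulVKf.
have x0 : nonneg_mx x.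
  move=> i j; rewrite ord1; move: i; apply: split_all => i.
    by rewrite col_mxEu.
  by rewrite col_mxEd mxZE mulr_ge0 // ?invr_ge0 ?ltW.
have xn0 : x != 0.
  apply/eqP => h; move/eqP: u1n0; apply.
  rewrite -[u1](col_mxKu _ (r^-1 *: u1)) -/x h.
  by apply/matrixP => i j; rewrite !mxE.
have [s rs root_s] := lbcore W20 x0 xn0 hx.
have := sr_ge hb2 (root_ceig root_s); rewrite cn_real => hs.
exact: le_trans rs (le_trans (ler_norm s) hs).
Qed.
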